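(* Assume $\beta>0$, $k>0$ and $u_0=-k$. Let $H(u,y)=\frac{y^2}{2}+\beta\left(-\frac{u^4}{4}+\frac{k+u_0}{3}u^3-\frac{ku_0}{2}u^2\right)=\frac{y^2}{2}+\beta\left(-\frac{u^4}{4}+\frac{k^2u^2}{2}\right)$, and for $h\in\left(0,\frac{\beta u_0^4}{4}\right)$ let $\Gamma_h$ be the closed component of $\{H(u,y)=h\}$ surrounding $(0,0)$. Then for every even positive integer $n$ the ratio $$G_n(h):=\frac{\oint_{\Gamma_h}u^n y\,du}{\oint_{\Gamma_h}y\,du}$$ is monotone for $h\in\left(0,\frac{\beta u_0^4}{4}\right)$.
   Context: For these parameters $(0,0)$ is a center of the Hamiltonian system $u'=y$, $y'=-\beta u(u-u_0)(k-u)$, and the curves $\Gamma_h$, $h\in(0,\beta u_0^4/4)$, form the periodic annulus around it, bounded by the heteroclinic orbits joining the saddles $(-k,0)$ and $(k,0)$. *)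

(* Defs.v *)
From HB Require Import structures.
From mathcomp Require Import all_boot all_order all_algebra.
From mathcomp Require Import all_classical all_reals all_analysis.
Set Implicit Arguments. Unset Strict Implicit. Unset Printing Implicit Defensive.
Import Order.TTheory GRing.Theory Num.Theory.
Local Open Scope classical_set_scope.
Local Open Scope ring_scope.

Section Defs.
Variable R : realType.

Definition Ham (beta k u0 u y : R) : R :=
  y ^+ 2 / 2 + beta * (- u ^+ 4 / 4 + (k + u0) / 3 * u ^+ 3 - k * u0 / 2 * u ^+ 2).

(* Gamma_h : the closed component of {H = h} surrounding (0,0), i.e. the part
   of the level set lying in the strip -k < u < k between the saddles
   (-k,0) and (k,0) (case u0 = -k). *)
Definition Gamma (beta k u0 h : R) : set (R * R) :=
  [set p | Ham beta k u0 p.1 p.2 = h /\ -k < p.1 < k].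

Definition Gamma_proj (beta k u0 h : R) : set R :=
  [set u | exists y, Gamma beta k u0 h (u, y)].

Definition ytop (beta k u0 h u : R) : R :=
  Num.sqrt (2 * (h - Ham beta k u0 u 0)).

(* Line integral  \oint_{Gamma_h} f(u) y du, Gamma_h oriented clockwise
   (upper branch traversed with increasing u, lower branch y = -ytop with
   decreasing u), so that it equals 2 \int_{-a}^{a} f(u) ytop(u) du. *)
Definition oint_fy (beta k u0 h : R) (f : R -> R) : R :=
  2 * Rintegral lebesgue_measure (Gamma_proj beta k u0 h)
        (fun u => f u * ytop beta k u0 h u).

Definition G_n (beta k u0 : R) (n : nat) (h : R) : R :=
  oint_fy beta k u0 h (fun u => u ^+ n) / oint_fy beta k u0 h (fun _ => 1).

Definition monotone_on (A : set R) (f : R -> R) : Prop :=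
  (forall x y, A x -> A y -> x <= y -> f x <= f y) \/
  (forall x y, A x -> A y -> x <= y -> f y <= f x).

End Defs.

(* Main.v *)
Require Import Defs.
From HB Require Import structures.
From mathcomp Require Import all_boot all_order all_algebra.
From mathcomp Require Import all_classical all_reals all_analysis.
From mathcomp Require Import ring lra.
Import Order.TTheory GRing.Theory Num.Theory.
Import numFieldNormedType.Exports.
Local Open Scope classical_set_scope.
Local Open Scope ring_scope.

Section S.
Variables (R : realType) (beta k : R).
Hypotheses (hb : 0 < beta) (hk : 0 < k).

Definition V (u : R) : R := beta * (k ^+ 2 * u ^+ 2 / 2 - u ^+ 4 / 4).
Definition p (h u : R) : R := Num.sqrt (2 * (h - V u)).

Lemma HamE u y : Ham beta k (- k) u y = y ^+ 2 / 2 + V u.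
Proof. rewrite /Ham /V. ring. Qed.

Lemma ytopE h u : ytop beta k (-k) h u = p h u.
Proof. by rewrite /ytop HamE /p expr0n /= mul0r add0r. Qed.

Lemma V_cont : continuous V.
Proof.
move=> x; rewrite /V.
apply: cvgM; first exact: cvg_cst.
apply: cvgB.
  apply: cvgM; last exact: cvg_cst.
  apply: cvgM; first exact: cvg_cst.
  exact: exprn_continuous.
apply: cvgM; last exact: cvg_cst.
exact: exprn_continuous.
Qed.

Lemma p_cont h : continuous (p h).
Proof.
move=> x; rewrite /p.
apply: (continuous_comp (f := fun u => 2 * (h - V u))); last exact: sqrt_continuous.
apply: cvgM; first exact: cvg_cst.
apply: cvgB; first exact: cvg_cst.
exact: V_cont.
Qed.

Lemma integ (g : R -> R) (a b : R) : continuous g ->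
  (@lebesgue_measure R).-integrable `[a, b] (EFin \o g).
Proof.
move=> cg; apply: continuous_compact_integrable; first exact: segment_compact.
exact: continuous_subspaceT.
Qed.

Notation mu := (@lebesgue_measure R).
Definition hmax := beta * (- k) ^+ 4 / 4.

Lemma Vk : V k = hmax.
Proof. by rewrite /V /hmax; field. Qed.
Lemma VNk : V (- k) = hmax.
Proof. by rewrite /V /hmax; field. Qed.

Lemma p_ge0 h u : 0 <= p h u.
Proof. exact: sqrtr_ge0. Qed.

Lemma p0 h u : h - V u <= 0 -> p h u = 0.
Proof. by move=> H; rewrite /p ler0_sqrtr // mulr_ge0_le0. Qed.

Lemma oint_eq h (f : R -> R) : 0 < h -> h < hmax ->
  oint_fy beta k (- k) h f = 2 * \int[mu]_(u in `[-k, k]) (f u * p h u).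
Proof.
move=> h0 hm; rewrite /oint_fy. 
rewrite [X in 2 * X = _]Rintegral_mkcond [X in _ = 2 * X]Rintegral_mkcond.
apply: f_equal. apply: f_equal. apply/funext => u.
rewrite !patchE.
have [G|nG] := boolP (u \in Gamma_proj beta k (-k) h).
  move: (G); rewrite inE => -[y [_ /andP[h1 h2]]].
  by rewrite ytopE mem_set //= in_itv /= !ltW.
case: ifPn => // uk.
have : h - V u <= 0.
  rewrite leNgt; apply/negP => pos; move/negP: nG; apply.
  rewrite inE; exists (p h u); split.
    by rewrite HamE /p sqr_sqrtr ?mulr_ge0 ?ltW //=; field.
  move: uk; rewrite inE /= in_itv /= => /andP[u1 u2] /=.
  rewrite !lt_neqAle u1 u2 !andbT; apply/andP; split.
    by apply/eqP => E; move: pos; rewrite -E VNk; lra.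
  by apply/eqP => E; move: pos; rewrite E Vk; lra.
by move/p0 => ->; rewrite mulr0.
Qed.

Lemma integ_mul (g : R -> R) (h : R) : continuous g ->
  mu.-integrable `[-k, k] (EFin \o (fun u => g u * p h u)).
Proof.
move=> cg; apply: integ => x; apply: cvgM; [exact: cg | exact: p_cont].
Qed.

Lemma pos_int (g : R -> R) (d c : R) : continuous g -> 0 < d -> d <= k -> 0 < c ->
  (forall u, -k <= u <= k -> 0 <= g u) ->
  (forall u, -d <= u <= d -> c <= g u) ->
  0 < \int[mu]_(u in `[-k, k]) g u.
Proof.
move=> cg d0 dk c0 gpos gc.
have sub : `[-d, d] `<=` `[-k, k].
  by apply: subset_itv; rewrite bnd_simp ?lerN2.
rewrite -(setDUK sub) Rintegral_setU //; last 2 first.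
- by rewrite (setDUK sub); exact: integ.
- by rewrite /disj_set; apply/eqP; rewrite -subset0 => x [a [_ b]].
apply: (@lt_le_trans _ _ (\int[mu]_(u in `[-d, d]) g u + 0)); last first.
  by apply: lerD => //; apply: Rintegral_ge0 => x [kx _]; apply: gpos; move: kx; rewrite /= in_itv.
rewrite addr0; apply: (@lt_le_trans _ _ (\int[mu]_(u in `[-d, d]) c)); last first.
  apply: le_Rintegral.
  - by [].
  - by apply: integ => x; exact: cvg_cst.
  - exact: integ.
  by move=> x /=; rewrite in_itv /= => /gc.
rewrite Rintegral_cst //.
have := @lebesgue_measure_itv R `[-d, d]. move=> /= E. rewrite E lte_fin.
have -> : (- d < d) = true by apply/idP; lra.
rewrite /=; apply: mulr_gt0 => //; lra.
exact: measurableD.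
Qed.


Lemma V_mono u v : u ^+ 2 <= v ^+ 2 -> v ^+ 2 <= k ^+ 2 -> V u <= V v.
Proof.
move=> uv vk.
have E : V v - V u = beta / 4 * ((v ^+ 2 - u ^+ 2) * (2 * k ^+ 2 - u ^+ 2 - v ^+ 2)).
  by rewrite /V; field.
have : 0 <= V v - V u.
  rewrite E; apply: mulr_ge0; [apply: divr_ge0; [exact: ltW | by []] | apply: mulr_ge0].
    lra.
  lra.
lra.
Qed.

Lemma cross h1 h2 u v : h1 <= h2 -> V v <= V u ->
  p h2 v * p h1 u <= p h2 u * p h1 v.
Proof.
move=> h12 Vvu.
have [H|H] := lerP (h1 - V u) 0.
  by rewrite (p0 _ _ H) mulr0; apply: mulr_ge0; exact: p_ge0.
rewrite /p -!sqrtrM; first last.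
- by apply: mulr_ge0; lra.
- by apply: mulr_ge0; lra.
rewrite ler_sqrt; last by apply: mulr_ge0; apply: mulr_ge0; lra.
have : 0 <= (h2 - h1) * (V u - V v) by apply: mulr_ge0; lra.
have -> : 2 * (h2 - V v) * (2 * (h1 - V u)) =
  2 * (h2 - V u) * (2 * (h1 - V v)) - 4 * ((h2 - h1) * (V u - V v)) by ring.
lra.
Qed.

Lemma p_lb h u : 0 < h -> beta * k ^+ 2 * u ^+ 2 <= h -> Num.sqrt h <= p h u.
Proof.
move=> h0 H; rewrite /p ler_sqrt; last first.
  apply: mulr_ge0 => //; rewrite /V.
  have : 0 <= beta * u ^+ 4 by apply: mulr_ge0; [exact: (ltW hb)| exact: exprn_even_ge0].
  lra.
rewrite /V.
have : 0 <= beta * u ^+ 4 by apply: mulr_ge0; [exact: (ltW hb)| exact: exprn_even_ge0].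
lra.
Qed.

Lemma small_d e : 0 < e -> exists d, [/\ 0 < d, d <= k &
  forall u, - d <= u <= d -> u ^+ 2 <= e].
Proof.
move=> e0; set m := Num.min (k ^+ 2) e.
have m0 : 0 < m by rewrite /m lt_min e0 exprn_gt0.
exists (Num.sqrt m); split.
- by rewrite sqrtr_gt0.
- rewrite -(ger0_norm (ltW hk)) -sqrtr_sqr ler_sqrt ?exprn_ge0 //; last exact: ltW.
  by rewrite /m ge_min lexx.
move=> u /andP[u1 u2].
have : u ^+ 2 <= Num.sqrt m ^+ 2 by nra.
rewrite sqr_sqrtr; last exact: ltW.
move=> H; apply: (le_trans H).
by rewrite /m ge_min lexx orbT.
Qed.

Notation J g := (\int[mu]_(u in `[-k, k]) g u).

Lemma Jlin (g1 g2 g3 g4 : R -> R) (a b c d : R) :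
  continuous g1 -> continuous g2 -> continuous g3 -> continuous g4 ->
  J (fun u => a * g1 u + b * g2 u + c * g3 u + d * g4 u) =
  a * J g1 + b * J g2 + c * J g3 + d * J g4.
Proof.
move=> c1 c2 c3 c4.
have cZ (g : R -> R) (x : R) : continuous g -> continuous (fun u => x * g u).
  by move=> cg y; apply: cvgM; [exact: cvg_cst | exact: cg].
have cD (f g : R -> R) : continuous f -> continuous g -> continuous (fun u => f u + g u).
  by move=> cf cg y; apply: cvgD; [exact: cf | exact: cg].
have C2 : continuous (fun u => a * g1 u + b * g2 u).
  by apply: (cD (fun u => a * g1 u) (fun u => b * g2 u)); exact: (cZ).
have C3 : continuous (fun u => a * g1 u + b * g2 u + c * g3 u).
  by apply: (cD (fun u => a * g1 u + b * g2 u) (fun u => c * g3 u)) => //; exact: (cZ).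
rewrite RintegralD //; last 2 first.
- exact: integ.
- apply: integ; exact: (cZ _ d c4).
rewrite RintegralD //; last 2 first.
- exact: integ.
- apply: integ; exact: (cZ _ c c3).
rewrite RintegralD //; last 2 first.
- apply: integ; exact: (cZ _ a c1).
- apply: integ; exact: (cZ _ b c2).
by rewrite !RintegralZl //; exact: integ.
Qed.

Lemma cont_mp (j : nat) h : continuous (fun u : R => u ^+ j * p h u).
Proof. move=> x; apply: cvgM; [exact: exprn_continuous | exact: p_cont]. Qed.

Lemma cont_1p h : continuous (fun u : R => 1 * p h u).
Proof. move=> x; apply: cvgM; [exact: cvg_cst | exact: p_cont]. Qed.


Lemma cont_lin (g1 g2 g3 g4 : R -> R) (a b c d : R) :
  continuous g1 -> continuous g2 -> continuous g3 -> continuous g4 ->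
  continuous (fun u => a * g1 u + b * g2 u + c * g3 u + d * g4 u).
Proof.
move=> c1 c2 c3 c4.
have cZ (g : R -> R) (x : R) : continuous g -> continuous (fun u => x * g u).
  by move=> cg y; apply: cvgM; [exact: cvg_cst | exact: cg].
have cD (f g : R -> R) : continuous f -> continuous g -> continuous (fun u => f u + g u).
  by move=> cf cg y; apply: cvgD; [exact: cf | exact: cg].
have C2 : continuous (fun u => a * g1 u + b * g2 u).
  by apply: (cD (fun u => a * g1 u) (fun u => b * g2 u)); exact: (cZ).
have C3 : continuous (fun u => a * g1 u + b * g2 u + c * g3 u).
  by apply: (cD (fun u => a * g1 u + b * g2 u) (fun u => c * g3 u)) => //; exact: (cZ).
by apply: (cD (fun u => a * g1 u + b * g2 u + c * g3 u) (fun u => d * g4 u)) => //; exact: (cZ).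
Qed.

Lemma A_pos h : 0 < h -> 0 < J (fun u => 1 * p h u).
Proof.
move=> h0.
have bk : 0 < beta * k ^+ 2 by apply: mulr_gt0 => //; exact: exprn_gt0.
have [d [d0 dk Hd]] := small_d _ (divr_gt0 h0 bk).
apply: (pos_int _ _ (Num.sqrt h) (cont_1p h) d0 dk).
- by rewrite sqrtr_gt0.
- by move=> u _; rewrite mul1r; exact: p_ge0.
move=> u /Hd ud; rewrite mul1r; apply: p_lb => //.
by rewrite mulrC -ler_pdivlMr.
Qed.

Lemma main (m : nat) h1 h2 : (0 < m)%N -> 0 < h1 -> h1 <= h2 -> h2 < hmax ->
  G_n beta k (-k) (2 * m) h1 <= G_n beta k (-k) (2 * m) h2.
Proof.
move=> m0 h10 h12 h2m.
have h20 : 0 < h2 by exact: lt_le_trans h12.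
have h1m : h1 < hmax by exact: le_lt_trans h2m.
rewrite /G_n !oint_eq //=.
have key (u : R) : u ^+ (2 * m) = (u ^+ 2) ^+ m by rewrite exprM.
have mono_pow (x y : R) : 0 <= x -> 0 <= y -> (x ^+ m <= y ^+ m) = (x <= y).
  by move=> x0 y0; apply: ler_pXn2r; rewrite ?nnegrE.
have A1p := A_pos _ h10.
have A2p := A_pos _ h20.
set F1 := J (fun u => u ^+ (2 * m) * p h1 u).
set F2 := J (fun u => u ^+ (2 * m) * p h2 u).
set A1 := J (fun u => 1 * p h1 u).
set A2 := J (fun u => 1 * p h2 u).
rewrite -!mulf_div divff ?mul1r //.
set mu0 := F1 / A1.
rewrite ler_pdivlMr //.
have F1ge : 0 <= F1.
  apply: Rintegral_ge0 => u _; apply: mulr_ge0; last exact: p_ge0.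
  by rewrite key; apply: exprn_ge0; exact: sqr_ge0.
have mu0ge : 0 <= mu0 by apply: divr_ge0 => //; exact: ltW.
have F1E : F1 = mu0 * A1 by rewrite /mu0 divfK // gt_eqF.
set s := mu0 `^ (m%:R^-1).
have s0 : 0 <= s by exact: powR_ge0.
have sm : s ^+ m = mu0.
  rewrite -powR_mulrn // -powRrM mulVf ?powRr1 //.
  by rewrite pnatr_eq0 -lt0n.
set t := Num.sqrt s.
have t2 : t ^+ 2 = s by rewrite sqr_sqrtr.
have uk2 (u : R) : - k <= u <= k -> u ^+ 2 <= k ^+ 2.
  by move=> /andP[u1 u2]; nra.
have [caseA|caseB] := boolP ((s <= k ^+ 2) && (0 < h1 - V t)).
  move/andP: caseA => [sk pt].
  have p1t : 0 < p h1 t by rewrite /p sqrtr_gt0; apply: mulr_gt0.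
  set lam := p h2 t / p h1 t.
  have ptw u : - k <= u <= k ->
      0 <= (u ^+ (2 * m) - mu0) * (p h2 u - lam * p h1 u).
    move=> /uk2 uk; rewrite key -sm.
    have [su|us] := lerP s (u ^+ 2).
    - apply: mulr_ge0.
        by rewrite subr_ge0 mono_pow // sqr_ge0.
      rewrite subr_ge0 /lam mulrAC ler_pdivrMr //.
      apply: cross => //; apply: V_mono => //; by rewrite t2.
    - apply: mulr_le0.
        by rewrite subr_le0 mono_pow ?sqr_ge0 // ltW.
      rewrite subr_le0 /lam mulrAC ler_pdivlMr //.
      apply: cross => //; apply: V_mono; rewrite t2 //; exact: ltW.
  have Jphi : 0 <= J (fun u => 1 * (u ^+ (2 * m) * p h2 u) + (- mu0) * (1 * p h2 u)
                   + (- lam) * (u ^+ (2 * m) * p h1 u) + (lam * mu0) * (1 * p h1 u)).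
    apply: Rintegral_ge0 => u; rewrite /= in_itv /= => /ptw H.
    apply: (le_trans H); rewrite le_eqVlt; apply/orP; left; apply/eqP; ring.
  rewrite Jlin in Jphi; try first [exact: cont_mp | exact: cont_1p].
  rewrite -/F1 -/F2 -/A1 -/A2 F1E in Jphi.
  have -> : F2 = F2 - mu0 * A2 + mu0 * A2 by ring.
  rewrite lerDr.
  have -> : F2 - mu0 * A2 = 1 * F2 + - mu0 * A2 + - lam * (mu0 * A1) + lam * mu0 * A1 by ring.
  exact: Jphi.
exfalso.
have s_pos : 0 < s.
  rewrite lt_neqAle s0 andbT; apply/eqP => s_0.
  move/negP: caseB; apply; apply/andP; split.
    by rewrite -s_0; exact: exprn_ge0 (ltW hk).
  rewrite /t -s_0 sqrtr0 /V expr0n /= mulr0 mul0r sub0r.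
  by rewrite expr0n /= mul0r oppr0 mulr0 subr0.
have notin (u : R) : - k <= u <= k -> 0 < h1 - V u -> u ^+ 2 < s.
  move=> uk pos; rewrite ltNge; apply/negP => su.
  move/negP: caseB; apply; apply/andP; split.
    exact: le_trans su (uk2 _ uk).
  apply: (lt_le_trans pos); rewrite lerD2l lerN2.
  by apply: V_mono; rewrite ?t2 // uk2.
have bk : 0 < beta * k ^+ 2 by apply: mulr_gt0 => //; exact: exprn_gt0.
have e0 : 0 < Num.min (h1 / (beta * k ^+ 2)) (s / 2).
  by rewrite lt_min divr_gt0 // divr_gt0.
have [d [d0 dk Hd]] := small_d _ e0.
have s2 : (s / 2) ^+ m < mu0.
  rewrite -sm ltr_pXn2r ?nnegrE ?divr_ge0 //; lra.
have : 0 < J (fun u => (-1) * (u ^+ (2 * m) * p h1 u) + mu0 * (1 * p h1 u)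
                   + 0 * (1 * p h1 u) + 0 * (1 * p h1 u)).
  apply: (pos_int _ _ (Num.sqrt h1 * (mu0 - (s / 2) ^+ m)) _ d0 dk).
  - by apply: cont_lin; first [exact: cont_mp | exact: cont_1p].
  - by apply: mulr_gt0; rewrite ?sqrtr_gt0 ?subr_gt0.
  - move=> u uk.
    have -> : (-1) * (u ^+ (2 * m) * p h1 u) + mu0 * (1 * p h1 u)
                   + 0 * (1 * p h1 u) + 0 * (1 * p h1 u) = (mu0 - u ^+ (2 * m)) * p h1 u by ring.
    have [H|H] := lerP (h1 - V u) 0.
      by rewrite (p0 _ _ H) mulr0.
    apply: mulr_ge0; last exact: p_ge0.
    rewrite subr_ge0 key -sm mono_pow ?sqr_ge0 //.
    exact: ltW (notin _ uk H).
  - move=> u /Hd ue.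
    have -> : (-1) * (u ^+ (2 * m) * p h1 u) + mu0 * (1 * p h1 u)
                   + 0 * (1 * p h1 u) + 0 * (1 * p h1 u) = p h1 u * (mu0 - u ^+ (2 * m)) by ring.
    apply: ler_pM.
    + exact: sqrtr_ge0.
    + by rewrite subr_ge0 ltW.
    + apply: p_lb => //; rewrite mulrC -ler_pdivlMr //.
      by apply: (le_trans ue); rewrite ge_min lexx.
    + rewrite lerD2l lerN2 key mono_pow ?sqr_ge0 ?divr_ge0 //.
      by apply: (le_trans ue); rewrite ge_min lexx orbT.
rewrite Jlin; try first [exact: cont_mp | exact: cont_1p].
rewrite -/F1 -/A1 F1E.
lra.
Qed.

End S.

Theorem proposition3p11 (R : realType) (beta k u0 : R) (n : nat) :
  0 < beta -> 0 < k -> u0 = - k ->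
  (0 < n)%N -> ~~ odd n ->
  monotone_on [set h : R | 0 < h < beta * u0 ^+ 4 / 4] (G_n beta k u0 n).
Proof.
move=> hb hk -> n0 ev.
have nE : n = (2 * n./2)%N by rewrite mul2n -[LHS]odd_double_half (negbTE ev).
have m0 : (0 < n./2)%N by move: n0; rewrite {1}nE muln_gt0 => /andP[].
rewrite nE; left => x y /= /andP[x0 xm] /andP[y0 ym] xy.
exact: (@main R beta k hb hk _ x y m0 x0 xy ym).
Qed.
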